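(* Let $\Lambda=\{\lambda_i\}_{i\geq 0}$ be a nontrivial numerical semigroup (i.e. $\Lambda\neq\mathbb{N}_0$) with $\lambda_0=0<\lambda_1<\cdots$ and conductor $c=\lambda_k$. Let $\lambda_s$ be an order-zero seed of $\Lambda$, let $\tilde\Lambda=\Lambda\setminus\{\lambda_s\}$, and set $\tilde s=s-k$ (so $0\le\tilde s<\lambda_1$ and $\lambda_s=c+\tilde s$). Let $S(\Lambda)=S_0S_1S_2\cdots$ be the seed string of $\Lambda$, and define the binary string $\tilde S=\tilde S_0\tilde S_1\cdots$ by $\tilde S_\ell=0$ if $\ell=\lambda_i+j$ for some $1\leq i<k$ and $0\leq j<\min(\tilde s,\lambda_{i+1}-\lambda_i)$, and $\tilde S_\ell=S_\ell$ otherwise. Then the seed string of $\tilde\Lambda$, which has conductor $c+\tilde s+1$, is $$S(\tilde\Lambda)=\tilde S_{\tilde s+1}\,\tilde S_{\tilde s+2}\cdots\tilde S_{c-1}\,\underbrace{0\cdots0\,1}_{2\tilde s}\,1\,1$$ (followed by zeros), where the underbraced block consists of $2\tilde s$ bits, namely $2\tilde s-1$ zeros followed by a one (and is empty when $\tilde s=0$). In particular, $S(\tilde\Lambda)=S_1\cdots S_{c-1}\,1\,1$ whenever $\tilde s=0$.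
   Context: A numerical semigroup is a subset $\Lambda\subseteq\mathbb{N}_0$ containing $0$, closed under addition, with finite complement; the elements of $\mathbb{N}_0\setminus\Lambda$ are gaps and their number $g$ is the genus. The elements are enumerated increasingly $\lambda_0=0<\lambda_1<\cdots$; $k$ is the smallest index such that $\lambda_i=i+g$ for all $i\geq k$, and the conductor is $c=\lambda_k$. A generator of a numerical semigroup is a nonzero element not expressible as a sum of two nonzero elements of the semigroup. For a numerical semigroup $\Gamma=\{\gamma_i\}_{i\ge0}$ (increasing enumeration) with conductor $c_\Gamma=\gamma_{k'}$, let $\Gamma_i=\Gamma\setminus\{\gamma_1,\dots,\gamma_i\}$; an element $\gamma_t$ with $t\geq k'$ is an order-$i$ seed of $\Gamma$ ($0\le i<k'$) if $\gamma_t+\gamma_i$ is a generator of $\Gamma_i$; order-zero seeds are the generators $\ge c_\Gamma$. The seed string $S(\Gamma)=S_0S_1S_2\cdots$ is the binary string defined, for $0\le i<k'$ and $0\le j<\gamma_{i+1}-\gamma_i$, by $S_{\gamma_i+j}=1$ if $c_\Gamma+j$ is an order-$i$ seed of $\Gamma$ and $S_{\gamma_i+j}=0$ otherwise, and $S_\ell=0$ for $\ell\ge c_\Gamma$ (so it is identified with its first $c_\Gamma$ bits). Here $\tilde\Lambda=\Lambda\setminus\{\lambda_s\}$ is again a numerical semigroup. *)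

(* Defs.v *)
From mathcomp Require Import all_boot.
From Stdlib Require Import ClassicalEpsilon.
Set Implicit Arguments. Unset Strict Implicit. Unset Printing Implicit Defensive.

Definition numerical_semigroup (L : pred nat) : Prop :=
  [/\ L 0, (forall x y, L x -> L y -> L (x + y)) &
      exists N, forall n, N <= n -> L n].

(* lambda_i : the i-th element in increasing order (lambda_0 = 0):
   the element x of L having exactly i elements of L below it. *)
Definition elt (L : pred nat) (i : nat) : nat :=
  epsilon (inhabits 0) (fun x => L x /\ count L (iota 0 x) = i).

Definition genus (L : pred nat) : nat :=
  epsilon (inhabits 0) (fun g => exists N, (forall n, N <= n -> L n) /\
                                   count (predC L) (iota 0 N) = g).

Definition cond_index (L : pred nat) : nat :=
  epsilon (inhabits 0) (fun k =>
    (forall i, k <= i -> elt L i = i + genus L) /\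
    (forall k', (forall i, k' <= i -> elt L i = i + genus L) -> k <= k')).

Definition conductor (L : pred nat) : nat := elt L (cond_index L).

Definition generator (L : pred nat) (x : nat) : bool :=
  [&& 0 < x, L x &
      ~~ has (fun a => [&& 0 < a, 0 < x - a, L a & L (x - a)]) (iota 0 x)].

Definition Lminus (L : pred nat) (i : nat) : pred nat :=
  [pred x | L x && all (fun j => x != elt L j) (iota 1 i)].

(* x (an element gamma_t of L with t >= k', i.e. x >= c) is an order-i seed
   of L if x + gamma_i is a generator of Gamma_i  (used for i < k'). *)
Definition is_seed (L : pred nat) (i x : nat) : bool :=
  [&& conductor L <= x, L x & generator (Lminus L i) (x + elt L i)].

(* Seed string: S_l = 1 iff l = gamma_i + j with i < k', 0 <= j < gamma_{i+1}-gamma_i,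
   and c + j an order-i seed; S_l = 0 otherwise (in particular for l >= c). *)
Definition seed_string (L : pred nat) (l : nat) : bool :=
  has (fun i => (elt L i <= l < elt L i.+1) &&
                is_seed L i (conductor L + (l - elt L i)))
      (iota 0 (cond_index L)).

Definition remove_elt (L : pred nat) (x : nat) : pred nat :=
  [pred y | L y && (y != x)].

(* Main.v *)
Require Import Defs.
From mathcomp Require Import all_boot.
From mathcomp Require Import zify.
From Stdlib Require Import ClassicalEpsilon.
Set Implicit Arguments. Unset Strict Implicit. Unset Printing Implicit Defensive.

Definition cntP (P : pred nat) x := count P (iota 0 x).

Section Basics.
Variable P : pred nat.
Hypothesis HP : numerical_semigroup P.

Lemma P0 : P 0. Proof. by case: HP. Qed.

Lemma cntS x : cntP P x.+1 = cntP P x + P x.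
Proof. by rewrite /cntP -addn1 iotaD count_cat /= add0n addn0. Qed.

Lemma cnt_mono x y : x <= y -> cntP P x <= cntP P y.
Proof.
elim: y => [|y IH]; first by rewrite leqn0 => /eqP ->.
rewrite leq_eqVlt => /orP [/eqP -> //| hxy].
rewrite cntS; apply: leq_trans (IH hxy) (leq_addr _ _).
Qed.

Lemma cnt_lt x y : P x -> x < y -> cntP P x < cntP P y.
Proof.
move=> px hxy; apply: leq_trans _ (cnt_mono hxy); by rewrite cntS px addn1.
Qed.

Lemma cnt_inj x y : P x -> P y -> cntP P x = cntP P y -> x = y.
Proof.
move=> px py e; case: (ltngtP x y) => // h.
- by have := cnt_lt px h; rewrite e ltnn.
- by have := cnt_lt py h; rewrite e ltnn.
Qed.

Lemma cnt_le x : cntP P x <= x.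
Proof. by rewrite /cntP -{2}(size_iota 0 x) count_size. Qed.

Lemma cnt_full N j : (forall n, N <= n -> P n) -> cntP P (N + j) = cntP P N + j.
Proof.
move=> hN; elim: j => [|j IH]; first by rewrite !addn0.
by rewrite addnS cntS IH hN ?leq_addr // addn1 addnS.
Qed.

Lemma elt_ex i : exists x, P x /\ cntP P x = i.
Proof.
case: HP => _ _ [N hN].
have ex : exists x, i < cntP P x.+1.
  exists (N + i); rewrite -addnS cnt_full //; lia.
case: (ex_minnP ex) => x hx hmin.
have hle : cntP P x <= i.
  case: x hx hmin => [|y] hx hmin; first by [].
  rewrite leqNgt; apply/negP => /hmin; by rewrite ltnn.
exists x; case px: (P x); move: hx; rewrite cntS px /= => hx; lia.
Qed.

Lemma elt_spec i : P (elt P i) /\ cntP P (elt P i) = i.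
Proof.
rewrite /elt; apply: (epsilon_spec (inhabits 0)
   (fun x => P x /\ count P (iota 0 x) = i)); exact: elt_ex i.
Qed.

Lemma elt_cnt y : P y -> elt P (cntP P y) = y.
Proof.
move=> py; have [h1 h2] := elt_spec (cntP P y); exact: cnt_inj h1 py h2.
Qed.

Lemma elt_lt i j : i < j -> elt P i < elt P j.
Proof.
move=> hij; rewrite ltnNge; apply/negP => h.
have := cnt_mono h; rewrite (elt_spec j).2 (elt_spec i).2; lia.
Qed.

Lemma elt_ltE i j : (elt P i < elt P j) = (i < j).
Proof.
case: (ltngtP i j) => h.
- by rewrite elt_lt.
- by have := elt_lt h; lia.
- by rewrite h ltnn.
Qed.

Lemma elt_leE i j : (elt P i <= elt P j) = (i <= j).
Proof. by rewrite leqNgt elt_ltE -leqNgt. Qed.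

Lemma elt0 : elt P 0 = 0.
Proof.
apply: cnt_inj; [exact: (elt_spec 0).1 | exact: P0 | by rewrite (elt_spec 0).2].
Qed.

Lemma cnt_pos y : 0 < y -> 0 < cntP P y.
Proof. move=> hy; have := cnt_lt P0 hy; by rewrite /cntP. Qed.

Lemma elt_interval l : elt P (cntP P l.+1).-1 <= l < elt P (cntP P l.+1).-1.+1.
Proof.
have hp : 0 < cntP P l.+1 by apply: cnt_pos.
set i := (cntP P l.+1).-1.
have hi : i.+1 = cntP P l.+1 by rewrite /i prednK.
apply/andP; split.
- rewrite leqNgt; apply/negP => h.
  have := cnt_mono h; rewrite (elt_spec i).2; lia.
- rewrite ltnNge; apply/negP => h.
  have := cnt_lt (elt_spec i.+1).1 (h : elt P i.+1 < l.+1).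
  rewrite (elt_spec i.+1).2; lia.
Qed.

Lemma cond_ex0 N : (forall n, N <= n -> P n) ->
  exists cc, (forall n, cc <= n -> P n) /\ (cc = 0 \/ ~~ P cc.-1).
Proof.
elim: N => [|N IH] hN; first by exists 0; split=>//; left.
case pN: (P N).
- apply: IH => n; rewrite leq_eqVlt => /orP [/eqP <- | ]; first by rewrite pN.
  exact: hN.
- by exists N.+1; split=>//; right; rewrite /= pN.
Qed.

Lemma cond_spec : (forall n, conductor P <= n -> P n) /\
   (forall N, (forall n, N <= n -> P n) -> conductor P <= N).
Proof.
have [cc [hcc hmin]] : exists cc, (forall n, cc <= n -> P n) /\
    (forall N, (forall n, N <= n -> P n) -> cc <= N).
  case: HP => _ _ [N hN]; case: (cond_ex0 hN) => cc [hcc hc]; exists cc; split=>// M hM.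
  rewrite leqNgt; apply/negP => hlt; case: hc => [hc0|hc]; first by rewrite hc0 in hlt.
  have : M <= cc.-1 by lia.
  by move/hM; rewrite (negbTE hc).
have hkc := cnt_le cc.
have hgen : genus P = cc - cntP P cc.
  rewrite /genus.
  have := epsilon_spec (inhabits 0) (fun g => exists N, (forall n, N <= n -> P n) /\
             count (predC P) (iota 0 N) = g) (ex_intro _ _ (ex_intro _ cc (conj hcc erefl))).
  case=> N [hN <-].
  have hcN := hmin N hN.
  rewrite -(subnKC hcN) iotaD count_cat.
  have -> : count (predC P) (iota (0 + cc) (N - cc)) = 0.
    apply/eqP; rewrite eqn0Ngt -has_count; apply/hasPn => n.
    rewrite mem_iota => /andP [h1 _] /=; rewrite negbK; apply: hcc; lia.
  have := count_predC P (iota 0 cc); rewrite size_iota /cntP; lia.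
have hk : forall j, elt P (cntP P cc + j) = cc + j.
  move=> j; rewrite -cnt_full //; apply: elt_cnt; apply: hcc; exact: leq_addr.
have Hk0 : (forall i, cntP P cc <= i -> elt P i = i + genus P) /\
    (forall k', (forall i, k' <= i -> elt P i = i + genus P) -> cntP P cc <= k').
  split.
  - move=> i hi; rewrite hgen; have := hk (i - cntP P cc); rewrite subnKC // => ->; lia.
  - move=> k' hk'; rewrite leqNgt; apply/negP => hlt.
    have e := hk' (cntP P cc).-1 ltac:(lia).
    rewrite hgen in e.
    have hpc : P cc.-1.
      have := (elt_spec (cntP P cc).-1).1; rewrite e.
      have -> : (cntP P cc).-1 + (cc - cntP P cc) = cc.-1 by lia.
      done.
    have : cc <= cc.-1.
      apply: hmin => n; rewrite leq_eqVlt => /orP [/eqP <- //| h]; apply: hcc; lia.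
    lia.
have hci : cond_index P = cntP P cc.
  rewrite /cond_index.
  have := epsilon_spec (inhabits 0) (fun k => (forall i, k <= i -> elt P i = i + genus P) /\
    (forall k', (forall i, k' <= i -> elt P i = i + genus P) -> k <= k')) (ex_intro _ _ Hk0).
  case=> h1 h2; apply: anti_leq; by rewrite (h2 _ Hk0.1) (Hk0.2 _ h1).
have -> : conductor P = cc by rewrite /conductor hci -[cntP P cc]addn0 hk addn0.
by split.
Qed.

End Basics.

Definition dec (P : pred nat) (n l : nat) : bool :=
  has (fun a => [&& l < a, l < n - a, P a & P (n - a)]) (iota 0 n).

Lemma decP (P : pred nat) n l : reflect (exists a b, [/\ a + b = n, l < a, l < b, P a & P b]) (dec P n l).
Proof.
apply: (iffP hasP) => [[a] | [a [b [hab la lb pa pb]]]].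
- rewrite mem_iota => /andP [_ han] /and4P [h1 h2 h3 h4].
  exists a, (n - a); split => //; lia.
- exists a; first by rewrite mem_iota; apply/andP; split; lia.
  have -> : n - a = b by lia.
  by rewrite la lb pa pb.
Qed.

Lemma seed_char P (HP : numerical_semigroup P) l :
  seed_string P l = (l < conductor P) && ~~ dec P (conductor P + l) l.
Proof.
have [cs1 cs2] := cond_spec HP.
have hck : elt P (cond_index P) = conductor P by [].
set c := conductor P in cs1 cs2 hck *; set k := cond_index P in hck *.
have sub : forall i, elt P i <= l < elt P i.+1 -> i < k ->
    is_seed P i (c + (l - elt P i)) = ~~ dec P (c + l) l.
  move=> i /andP [h1 h2] hik.
  have hlc : l < c by rewrite -hck; apply: leq_trans h2 _; rewrite (elt_leE HP).
  rewrite /is_seed leq_addr cs1 ?leq_addr //= -addnA subnK //.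
  have Lm : forall y, 0 < y -> Lminus P i y = P y && (l < y).
    move=> y hy; rewrite /Lminus inE; case py: (P y) => //=.
    apply/allP/idP.
    - move=> h; rewrite ltnNge; apply/negP => hyl.
      have hy' := elt_cnt HP py.
      have hj1 := cnt_pos HP hy.
      have hj2 : cntP P y < i.+1.
        have := cnt_lt py (leq_ltn_trans hyl h2 : y < elt P i.+1).
        by rewrite (elt_spec HP i.+1).2.
      have := h (cntP P y); rewrite mem_iota hy' eqxx; move/(_ ltac:(apply/andP; split; lia)).
      done.
    - move=> hly j; rewrite mem_iota => /andP [j1 j2].
      have hji : elt P j <= elt P i by rewrite (elt_leE HP); lia.
      apply/eqP => e; lia.
  have hM : Lminus P i (c + l).
    rewrite Lm; last lia.
    rewrite cs1 ?leq_addr //=; lia.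
  have hcl : 0 < c + l by lia.
  rewrite /generator hM hcl /=.
  congr (~~ _); apply: eq_in_has => a; rewrite mem_iota => /andP [_ ha].
  set b := c + l - a.
  case: (posnP a) => [-> | ha0]; first by rewrite ltn0.
  case: (posnP b) => [-> | hb0]; first by rewrite ltn0 /= andbF.
  rewrite !Lm //=.
  by case: (P a); case: (l < a); case: (P b); case: (l < b).
apply/idP/idP.
- move/hasP => [i]; rewrite mem_iota => /andP [_ hik] /andP [hint hseed].
  rewrite sub // in hseed; rewrite hseed andbT.
  case/andP: hint => _ h2; rewrite -hck; apply: leq_trans h2 _; rewrite (elt_leE HP); lia.
- move/andP => [hlc hnd]; apply/hasP.
  have hint := elt_interval HP l.
  have hik : (cntP P l.+1).-1 < k.
    rewrite -(elt_ltE HP) hck; case/andP: hint => h1 _; lia.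
  exists (cntP P l.+1).-1; first by rewrite mem_iota; apply/andP; split; lia.
  by rewrite hint /= sub.
Qed.

Theorem lemma4 (L : pred nat) (s : nat) :
  numerical_semigroup L ->
  (exists n, ~~ L n) ->
  is_seed L 0 (elt L s) ->
  let c := conductor L in
  let k := cond_index L in
  let ts := s - k in
  let Lt := remove_elt L (elt L s) in
  let Sd := seed_string L in
  let St := fun l : nat =>
    if has (fun i => elt L i <= l < elt L i + minn ts (elt L i.+1 - elt L i))
           (iota 1 k.-1)
    then false else Sd l in
  [/\ conductor Lt = c + ts + 1,
      seed_string Lt =1 (fun m =>
        if m < c - 1 - ts then St (ts + 1 + m)
        else let r := m - (c - 1 - ts) in
             if r < 2 * ts then r == (2 * ts).-1
             else (r == 2 * ts) || (r == (2 * ts).+1))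
    & ts = 0 ->
      seed_string Lt =1 (fun m =>
        if m < c - 1 then Sd m.+1 else (m == c - 1) || (m == c))].
Proof.
move=> HP hnt hseed c k ts Lt Sd St.
set F := (fun m => if m < c - 1 - ts then St (ts + 1 + m)
        else let r := m - (c - 1 - ts) in
             if r < 2 * ts then r == (2 * ts).-1
             else (r == 2 * ts) || (r == (2 * ts).+1)).
have [cs1 cs2] := cond_spec HP.
have hck : elt L k = c by [].
have hc0 : 0 < c.
  case: hnt => n hn; rewrite lt0n; apply/eqP => e.
  by move: hn; rewrite cs1 // -/c e.
set x := elt L s in hseed Lt *.
case/and3P: hseed => hcx hLx hgen.
rewrite (elt0 HP) addn0 in hgen.
have hgx : forall a b, 0 < a -> 0 < b -> a + b = x -> L a -> L b -> False.
  move=> a b ha hb hab pa pb.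
  case/and3P: hgen => _ _ /hasPn hh.
  have hm : a \in iota 0 x by rewrite mem_iota; apply/andP; split; lia.
  move: (hh a hm); rewrite /Lminus /=.
  have -> : x - a = b by lia.
  by rewrite ha hb pa pb.
have hk : forall j, elt L (k + j) = c + j.
  move=> j; have := elt_cnt HP (cs1 (c + j) (leq_addr _ _)).
  rewrite cnt_full // -hck (elt_spec HP k).2 //.
have hsk : k <= s by rewrite -(elt_leE HP k s) hck.
have hx : x = c + ts by have := hk (s - k); rewrite subnKC.
have htc : ts < c.
  rewrite ltnNge; apply/negP => h.
  apply: (hgx c ts); [lia | lia | lia | exact: cs1 | exact: cs1].
have LtE : forall y, Lt y = L y && (y != x) by [].
have LtHP : numerical_semigroup Lt.
  case: HP => h0 hadd [N hN]; split.
  - rewrite LtE h0 /=; lia.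
  - move=> y z; rewrite !LtE => /andP [py ny] /andP [pz nz].
    rewrite hadd //=; apply/eqP => e.
    case: (posnP y) => hy; first by move: nz; rewrite -e hy add0n eqxx.
    case: (posnP z) => hz; first by move: ny; rewrite -e hz addn0 eqxx.
    exact: (hgx y z).
  - exists x.+1 => n hn; rewrite LtE cs1 /=; lia.
have cLt : conductor Lt = x.+1.
  have [ct1 ct2] := cond_spec LtHP.
  apply: anti_leq; apply/andP; split.
  - apply: ct2 => n hn; rewrite LtE cs1 /=; lia.
  - rewrite ltnNge; apply/negP => h.
    by move: (ct1 x h); rewrite LtE eqxx andbF.
have P2 : seed_string Lt =1 F.
  move=> m; rewrite (seed_char LtHP) cLt /F.
  case hm : (m < c - 1 - ts).
  - set l := ts + 1 + m.
    have hlc : l < c by lia.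
    rewrite /St /Sd (seed_char HP) -/c hlc /=.
    set H := has _ (iota 1 k.-1).
    have Hlem : forall a, L a -> 0 < a -> a <= l -> l - a < ts -> H.
      move=> a pa ha0 hal hlt; apply/hasP.
      have hint := elt_interval HP l.
      set i := (cntP L l.+1).-1 in hint *.
      have hai : a <= elt L i.
        rewrite -(elt_cnt HP pa) (elt_leE HP).
        have := cnt_lt pa (hal : a < l.+1); rewrite /i; lia.
      have hi0 : 0 < i by rewrite -(elt_ltE HP 0 i) (elt0 HP); lia.
      have hik : i < k by rewrite -(elt_ltE HP i k) hck; lia.
      exists i; first by rewrite mem_iota; apply/andP; split; lia.
      lia.
    have claim : dec Lt (x.+1 + m) m = dec L (c + l) l || H.
      apply/idP/idP.
      - move/decP => [a [b [hab ha hb pa pb]]].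
        move: pa pb; rewrite !LtE => /andP [pa na] /andP [pb nb].
        case: (leqP a l) => hal.
        + by apply/orP; right; apply: (Hlem a) => //; lia.
        case: (leqP b l) => hbl.
        + by apply/orP; right; apply: (Hlem b) => //; lia.
        apply/orP; left; apply/decP; exists a, b; split => //; lia.
      - case/orP.
        + move/decP => [a [b [hab ha hb pa pb]]]; apply/decP; exists a, b.
          rewrite !LtE pa pb /=; split; lia.
        + move/hasP => [i]; rewrite mem_iota => /andP [i1 i2] /andP [hi1 hi2].
          apply/decP; exists (elt L i), (c + l - elt L i).
          have pi := (elt_spec HP i).1.
          rewrite !LtE pi cs1 /=; last lia.
          split; lia.
    rewrite claim (_ : m < x.+1 = true) /=; last lia.
    by case: (H); case: (dec L (c + l) l).
  - set r := m - (c - 1 - ts).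
    rewrite /=.
    case: (leqP (2 * ts).+2 r) => hr.
    + rewrite (_ : m < x.+1 = false) /=; last lia.
      case: ifP => hif; lia.
    + rewrite (_ : m < x.+1 = true) /=; last lia.
      have key : dec Lt (x.+1 + m) m = (r.+2 <= 2 * ts).
        apply/idP/idP.
        * move/decP => [a [b [hab ha hb pa pb]]].
          move: pa pb; rewrite !LtE => /andP [_ na] /andP [_ nb]; lia.
        * move=> hr2; apply/decP.
          exists (c + (r.+1 - ts)), (c + r - (r.+1 - ts)).
          rewrite !LtE !cs1 /=; try lia.
          split; lia.
      rewrite key; case: ifP => hif; lia.
split => //.
- rewrite cLt hx; lia.
- move=> ts0 m; rewrite P2 /F /St.
  have -> : has (fun i => elt L i <= ts + 1 + m < elt L i + minn ts (elt L i.+1 - elt L i))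
           (iota 1 k.-1) = false.
    apply/negbTE/hasPn => i _; rewrite ts0; lia.
  rewrite ts0 /= subn0 add0n add1n.
  case: ifP => // hm; lia.
Qed.
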